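(* (Strong Laurent phenomenon.) For any $m\in\mathbb{Z}$, $$\mathcal{A}(P_1,P_2)=\bigcap_{k\in\mathbb{Z}}\mathcal{T}_k=\bigcap_{k=m-1}^{m+1}\mathcal{T}_k,$$ the intersections taken in $\Bbbk(x_1,x_2)$.
   Context: $\Bbbk$ is a field of characteristic zero and $P_1,P_2\in\Bbbk[z]$ are monic palindromic polynomials of degrees $d_1,d_2\ge0$ (palindromic: $P(z)=z^dP(z^{-1})$ for $d=\deg P$). With $x_1,x_2$ commuting indeterminates, define $x_k\in\Bbbk(x_1,x_2)$ for all $k\in\mathbb{Z}$ by $x_{k+1}x_{k-1}=P_1(x_k)$ if $k$ is even and $x_{k+1}x_{k-1}=P_2(x_k)$ if $k$ is odd. $\underline\Bbbk$ is the $\mathbb{Z}$-subalgebra of $\Bbbk$ generated by the coefficients of $P_1,P_2$; $\mathcal{A}(P_1,P_2)$ is the $\underline\Bbbk$-subalgebra of $\Bbbk(x_1,x_2)$ generated by all $x_k$; $\mathcal{T}_k=\underline\Bbbk[x_k^{\pm1},x_{k+1}^{\pm1}]$. *)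

(* Defs.v *)
From HB Require Import structures.
From mathcomp Require Import all_boot all_order all_algebra fraction.
Set Implicit Arguments. Unset Strict Implicit. Unset Printing Implicit Defensive.
Import Order.TTheory GRing.Theory Num.Theory.
Local Open Scope ring_scope.
Local Notation "x %:F" := (@FracField.tofrac _ x).


(* Palindromic: P(z) = z^d P(z^-1), d = deg P, i.e. coefficients symmetric. *)
Definition palindromic (k : nzRingType) (P : {poly k}) : Prop :=
  forall i : nat, (i <= (size P).-1)%N -> P`_i = P`_((size P).-1 - i).

(* The field k(x1,x2) := fraction field of k[x1][x2] (nested polynomials).
   x1 = the inner variable, x2 = the outer variable. *)
Definition Kx (k : fieldType) := {fraction {poly {poly k}}}.

Definition kemb (k : fieldType) (c : k) : Kx k := (c%:P%:P)%:F.
Definition X1 (k : fieldType) : Kx k := (('X : {poly k})%:P)%:F.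
Definition X2 (k : fieldType) : Kx k := ('X : {poly {poly k}})%:F.

Definition peval (k : fieldType) (P : {poly k}) (f : Kx k) : Kx k :=
  (map_poly (@kemb k) P).[f].

(* forward: fpair n = (x_{n+1}, x_{n+2}) *)
Fixpoint fpair (k : fieldType) (P1 P2 : {poly k}) (n : nat) : Kx k * Kx k :=
  match n with
  | 0 => (X1 k, X2 k)
  | n'.+1 => let: (a, b) := fpair P1 P2 n' in
             (b, peval (if odd n' then P2 else P1) b / a)
  end.

(* backward: bpair n = (x_{2-n}, x_{1-n}) *)
Fixpoint bpair (k : fieldType) (P1 P2 : {poly k}) (n : nat) : Kx k * Kx k :=
  match n with
  | 0 => (X2 k, X1 k)
  | n'.+1 => let: (a, b) := bpair P1 P2 n' in
             (b, peval (if odd n' then P1 else P2) b / a)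
  end.

(* x_k for k in Z: x_{k+1} x_{k-1} = P1(x_k) (k even), P2(x_k) (k odd). *)
Definition xseq (k : fieldType) (P1 P2 : {poly k}) (j : int) : Kx k :=
  if (1 <= j) then (fpair P1 P2 `|j - 1|%N).1
  else (bpair P1 P2 `|1 - j|%N).2.

Inductive gen_ring (R : nzRingType) (S : R -> Prop) : R -> Prop :=
| gr_S x : S x -> gen_ring S x
| gr_1 : gen_ring S 1
| gr_N x : gen_ring S x -> gen_ring S (- x)
| gr_D x y : gen_ring S x -> gen_ring S y -> gen_ring S (x + y)
| gr_M x y : gen_ring S x -> gen_ring S y -> gen_ring S (x * y).

(* images in k(x1,x2) of the coefficients of P1, P2 (generators of the
   Z-algebra underline-k) *)
Definition coefset (k : fieldType) (P1 P2 : {poly k}) (f : Kx k) : Prop :=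
  exists i : nat, f = kemb (P1`_i) \/ f = kemb (P2`_i).

Definition clusterA (k : fieldType) (P1 P2 : {poly k}) : Kx k -> Prop :=
  gen_ring (fun f => coefset P1 P2 f \/ exists j : int, f = xseq P1 P2 j).

Definition Tring (k : fieldType) (P1 P2 : {poly k}) (j : int) : Kx k -> Prop :=
  gen_ring (fun f => coefset P1 P2 f
     \/ f = xseq P1 P2 j \/ f = (xseq P1 P2 j)^-1
     \/ f = xseq P1 P2 (j + 1) \/ f = (xseq P1 P2 (j + 1))^-1).

(* Main.v *)
Require Import Defs.
From HB Require Import structures.
From mathcomp Require Import all_boot all_order all_algebra fraction.
From mathcomp Require Import polyXY ring zify.
From Stdlib Require Import ClassicalEpsilon.
Import Order.TTheory GRing.Theory Num.Theory.
Set Implicit Arguments. Unset Strict Implicit. Unset Printing Implicit Defensive.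
Local Open Scope ring_scope.
Local Notation "x %:F" := (@FracField.tofrac _ x).

Section Gen.
Variable R : nzRingType.
Implicit Type G : R -> Prop.
Lemma gr_0 G : gen_ring G 0.
Proof. by rewrite -(subrr (1:R)); apply: gr_D; [apply: gr_1|apply: gr_N; apply: gr_1]. Qed.
Lemma gr_B G x y : gen_ring G x -> gen_ring G y -> gen_ring G (x - y).
Proof. by move=> ? ?; apply: gr_D => //; apply: gr_N. Qed.
Lemma gr_X G x n : gen_ring G x -> gen_ring G (x ^+ n).
Proof. by move=> gx; elim: n => [|n IH]; [rewrite expr0; apply: gr_1|rewrite exprS; apply: gr_M]. Qed.
Lemma gr_sum G n (F : 'I_n -> R) : (forall i, gen_ring G (F i)) -> gen_ring G (\sum_(i < n) F i).
Proof.
move=> h; elim/big_ind: _ => //; [exact: gr_0| by move=> ? ? ? ?; apply: gr_D].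
Qed.
Lemma gr_mono G1 G2 x : (forall f, G1 f -> gen_ring G2 f) -> gen_ring G1 x -> gen_ring G2 x.
Proof.
move=> h; elim=> {x} [x /h//||||]; first exact: gr_1.
- by move=> x _ ?; apply: gr_N.
- by move=> x y _ ? _ ?; apply: gr_D.
- by move=> x y _ ? _ ?; apply: gr_M.
Qed.
End Gen.

Section S.
Variable k : fieldType.
Lemma kemb_zm : zmod_morphism (@kemb k). Proof. by move=> a b; rewrite /kemb !rmorphB. Qed.
Lemma kemb_mm : monoid_morphism (@kemb k).
Proof. by split=> [|a b]; rewrite /kemb ?rmorph1 // !rmorphM. Qed.
HB.instance Definition _ := GRing.isZmodMorphism.Build k (Kx k) (@kemb k) kemb_zm.
HB.instance Definition _ := GRing.isMonoidMorphism.Build k (Kx k) (@kemb k) kemb_mm.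
Definition evi (z : Kx k) := horner_eval z \o map_poly (@kemb k).
HB.instance Definition _ (z : Kx k) := GRing.RMorphism.copy (evi z) (horner_eval z \o map_poly (@kemb k)).
Definition ev (y z : Kx k) := horner_eval y \o map_poly (evi z).
HB.instance Definition _ (y z : Kx k) := GRing.RMorphism.copy (ev y z) (horner_eval y \o map_poly (evi z)).


Lemma evD y z (F G : {poly {poly k}}) : ev y z (F + G) = ev y z F + ev y z G. Proof. exact: rmorphD. Qed.
Lemma ev0 y z : ev y z (0 : {poly {poly k}}) = 0. Proof. exact: rmorph0. Qed.
Lemma evN y z (F : {poly {poly k}}) : ev y z (-F) = - ev y z F.
Proof. by apply/eqP; rewrite -subr_eq0 opprK -evD addNr ev0. Qed.
Lemma evB y z (F G : {poly {poly k}}) : ev y z (F - G) = ev y z F - ev y z G.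
Proof. by rewrite evD evN. Qed.
Lemma evM y z (F G : {poly {poly k}}) : ev y z (F * G) = ev y z F * ev y z G. Proof. exact: rmorphM. Qed.
Lemma evXn y z (F : {poly {poly k}}) n : ev y z (F ^+ n) = ev y z F ^+ n. Proof. exact: rmorphXn. Qed.
Lemma ev1 y z : ev y z (1 : {poly {poly k}}) = 1. Proof. exact: rmorph1. Qed.
Lemma eviD z (p q : {poly k}) : evi z (p + q) = evi z p + evi z q. Proof. exact: rmorphD. Qed.
Lemma evi0 z : evi z (0 : {poly k}) = 0. Proof. exact: rmorph0. Qed.
Lemma eviN z (p : {poly k}) : evi z (-p) = - evi z p.
Proof. by apply/eqP; rewrite -subr_eq0 opprK -eviD addNr evi0. Qed.
Lemma eviB z (p q : {poly k}) : evi z (p - q) = evi z p - evi z q.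
Proof. by rewrite eviD eviN. Qed.
Lemma eviM z (p q : {poly k}) : evi z (p * q) = evi z p * evi z q. Proof. exact: rmorphM. Qed.
Lemma eviXn z (p : {poly k}) n : evi z (p ^+ n) = evi z p ^+ n. Proof. exact: rmorphXn. Qed.
Lemma evi1 z : evi z (1 : {poly k}) = 1. Proof. exact: rmorph1. Qed.
Lemma kembD (a b : k) : kemb (a + b) = kemb a + kemb b. Proof. exact: rmorphD. Qed.
Lemma kemb0 : kemb (0 : k) = 0. Proof. exact: rmorph0. Qed.
Lemma kembN (a : k) : kemb (- a) = - kemb a.
Proof. by apply/eqP; rewrite -subr_eq0 opprK -kembD addNr kemb0. Qed.
Lemma kembM (a b : k) : kemb (a * b) = kemb a * kemb b. Proof. exact: rmorphM. Qed.
Lemma kemb1 : kemb (1 : k) = 1. Proof. exact: rmorph1. Qed.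

Lemma eviE z p : evi z p = peval p z. Proof. by []. Qed.
Lemma evi_C z c : evi z c%:P = kemb c. Proof. by rewrite /evi /= horner_evalE map_polyC hornerC. Qed.
Lemma evi_X z : evi z 'X = z. Proof. by rewrite /evi /= horner_evalE map_polyX hornerX. Qed.
Lemma ev_polyC y z p : ev y z p%:P = evi z p. Proof. by rewrite /ev /= horner_evalE map_polyC hornerC. Qed.
Lemma ev_C y z c : ev y z c%:P%:P = kemb c. Proof. by rewrite ev_polyC evi_C. Qed.
Lemma ev_X y z : ev y z 'X = y. Proof. by rewrite /ev /= horner_evalE map_polyX hornerX. Qed.
Lemma ev_XP y z : ev y z 'X%:P = z. Proof. by rewrite ev_polyC evi_X. Qed.
Lemma ev_lift y z p : ev y z (map_poly polyC p) = peval p y.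
Proof.
rewrite /ev /= horner_evalE -map_poly_comp /peval; congr (_.[_]); apply: eq_map_poly => c /=.
exact: evi_C.
Qed.

Lemma rm2_eq (K : comNzRingType) (f g : {rmorphism {poly {poly k}} -> K}) :
  (forall c, f c%:P%:P = g c%:P%:P) -> f 'X = g 'X -> f 'X%:P = g 'X%:P -> f =1 g.
Proof.
move=> hc hX hXP F; elim/poly_ind: F => [|F p IH]; first by rewrite !rmorph0.
rewrite !rmorphD !rmorphM IH hX; congr (_ + _).
elim/poly_ind: p => [|p c IH2]; first by rewrite !rmorph0.
by rewrite polyCD polyCM !rmorphD !rmorphM IH2 hXP hc.
Qed.

Lemma ev_swap a b F : ev a b (swapXY F) = ev b a F.
Proof.
have h := @rm2_eq _ (ev a b \o swapXY) (ev b a).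
apply: h => [c||] /=.
- by rewrite swapXY_polyC map_polyC /= !ev_C.
- by rewrite swapXY_X ev_XP ev_X.
- by rewrite swapXY_polyC map_polyX ev_X ev_XP.
Qed.

Definition Indep (y z : Kx k) := forall F, ev y z F = 0 -> F = 0.

Lemma Indep_swap y z : Indep y z -> Indep z y.
Proof. by move=> h F; rewrite -ev_swap => /h /eqP; rewrite swapXY_eq0 => /eqP. Qed.

Lemma Indep_base : Indep (X2 k) (X1 k).
Proof.
move=> F; have -> : ev (X2 k) (X1 k) F = F%:F.
  have h := @rm2_eq _ (ev (X2 k) (X1 k)) (@FracField.tofrac _).
  by apply: h => [c||] /=; rewrite ?ev_C ?ev_X ?ev_XP.
by move=> /eqP; rewrite tofrac_eq0 => /eqP.
Qed.

Lemma Indep_neq0 y z : Indep y z -> y != 0 /\ z != 0.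
Proof.
move=> h; split; apply/eqP.
  by move=> y0; have := h 'X; rewrite ev_X => /(_ y0) /eqP; rewrite polyX_eq0.
by move=> z0; have := h 'X%:P; rewrite ev_XP => /(_ z0) /eqP; rewrite polyC_eq0 polyX_eq0.
Qed.
End S.


Definition asb (P : Prop) : bool := if excluded_middle_informative P then true else false.
Lemma asbP P : reflect P (asb P).
Proof. by rewrite /asb; case: excluded_middle_informative => h; constructor. Qed.

Section B.
Variables (k : fieldType) (P1 P2 : {poly k}).
Definition CSk (c : k) := exists i, c = P1`_i \/ c = P2`_i.
Definition Bkp : pred k := fun c => asb (gen_ring CSk c).
Lemma Bk_closed : subring_closed Bkp.
Proof.
split; first by apply/asbP; apply: gr_1.
  by move=> x y /asbP hx /asbP hy; apply/asbP; apply: gr_B.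
by move=> x y /asbP hx /asbP hy; apply/asbP; apply: gr_M.
Qed.
HB.instance Definition _ := GRing.isSubringClosed.Build k Bkp Bk_closed.

Notation BP1 p := (p \is a polyOver Bkp).
Notation BP2 F := (F \is a polyOver (polyOver_pred Bkp)).

Lemma BP2M F G : BP2 F -> BP2 G -> BP2 (F * G).
Proof. exact: rpredM. Qed.

Definition cs := coefset P1 P2.
Definition LP (y z : Kx k) :=
  gen_ring (fun f => cs f \/ f = y \/ f = y^-1 \/ f = z \/ f = z^-1).

Lemma LP_swap y z f : LP y z f -> LP z y f.
Proof. by apply: gr_mono => g h; apply: gr_S; tauto. Qed.

Lemma kemb_gr (G : Kx k -> Prop) c : (forall f, cs f -> G f) -> c \in Bkp -> gen_ring G (kemb c).
Proof.
move=> hG /asbP; elim=> {c} [c [i hc]||||].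
- by apply: gr_S; apply: hG; exists i; case: hc => ->; tauto.
- by rewrite kemb1; apply: gr_1.
- by move=> x _ h; rewrite kembN; apply: gr_N.
- by move=> x y _ hx _ hy; rewrite kembD; apply: gr_D.
- by move=> x y _ hx _ hy; rewrite kembM; apply: gr_M.
Qed.

Lemma gr_evi (G : Kx k -> Prop) z p : (forall f, cs f -> G f) -> gen_ring G z -> BP1 p ->
  gen_ring G (evi z p).
Proof.
move=> hG hz /polyOverP hp; rewrite /evi /= horner_evalE horner_coef.
apply: gr_sum => i; apply: gr_M; last exact: gr_X.
by rewrite coef_map /=; apply: kemb_gr.
Qed.

Lemma gr_ev (G : Kx k -> Prop) y z F : (forall f, cs f -> G f) -> gen_ring G y ->
  gen_ring G z -> BP2 F -> gen_ring G (ev y z F).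
Proof.
move=> hG hy hz /polyOverP hF; rewrite /ev /= horner_evalE horner_coef.
apply: gr_sum => i; apply: gr_M; last exact: gr_X.
by rewrite coef_map /=; apply: gr_evi => //; apply: hF.
Qed.

Lemma NF y z f : y != 0 -> z != 0 -> LP y z f ->
  exists F a b, BP2 F /\ f * y ^+ a * z ^+ b = ev y z F.
Proof.
move=> y0 z0; elim=> {f} [f hf||||].
- case: hf => [[i hc]|[->|[->|[->|->]]]].
  + have [c [hc' ->]] : exists c, c \in Bkp /\ f = kemb c.
      case: hc => ->; [exists P1`_i | exists P2`_i]; split => //;
        by apply/asbP; apply: gr_S; exists i; tauto.
    by exists (c%:P%:P), 0%N, 0%N; rewrite ev_C !expr0 !mulr1; split => //; rewrite !polyOverC.
  + by exists 'X, 0%N, 0%N; rewrite ev_X !expr0 !mulr1; split => //; apply: polyOverX.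
  + exists 1, 1%N, 0%N; split; first exact: rpred1.
    by rewrite ev1 expr1 expr0 mulr1 (mulVf y0).
  + by exists 'X%:P, 0%N, 0%N; rewrite ev_XP !expr0 !mulr1; split => //; rewrite polyOverC polyOverX.
  + exists 1, 0%N, 1%N; split; first exact: rpred1.
    by rewrite ev1 expr1 expr0 mulr1 (mulVf z0).
- by exists 1, 0%N, 0%N; rewrite ev1 !expr0 !mulr1; split => //; apply: rpred1.
- move=> x _ [F [a [b [hF e]]]]; exists (- F), a, b; split; first by rewrite rpredN.
  by rewrite evN -e !mulNr.
- move=> x1 x2 _ [F1 [a1 [b1 [hF1 e1]]]] _ [F2 [a2 [b2 [hF2 e2]]]].
  exists (F1 * 'X ^+ a2 * 'X%:P ^+ b2 + F2 * 'X ^+ a1 * 'X%:P ^+ b1), (a1 + a2)%N, (b1 + b2)%N.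
  split.
    have hX : 'X \is a polyOver (polyOver_pred (Bkp)) by exact: polyOverX.
    have hY : 'X%:P \is a polyOver (polyOver_pred (Bkp)) by rewrite polyOverC; exact: polyOverX.
    by apply: rpredD; apply: rpredM; rewrite ?rpredX // rpredM // rpredX.
  rewrite evD !evM !evXn ev_X ev_XP -e1 -e2 !exprD. ring.
- move=> x1 x2 _ [F1 [a1 [b1 [hF1 e1]]]] _ [F2 [a2 [b2 [hF2 e2]]]].
  exists (F1 * F2), (a1 + a2)%N, (b1 + b2)%N; split; first exact: rpredM.
  rewrite evM -e1 -e2 !exprD. ring.
Qed.
End B.


Lemma fid1 (K : fieldType) (e Ya Zb Zg Qh Yh YS : K): Ya != 0 -> Zb != 0 -> Yh != 0 ->
  e * (Zg * Qh) * YS - Zb * (Ya * Yh) * (e / (Ya * Zb) * Zg * (Qh / Yh) * YS) = 0.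
Proof. move=> h1 h2 h3; field; by rewrite h1 h2 h3. Qed.

Lemma fid2 (K : fieldType) (kd Q zb zc Y : K) : Y != 0 ->
  kd * Q * (zb * zc) = Y * zb * (Q / Y) * (kd * zc).
Proof. move=> h1; field; exact: h1. Qed.
Lemma fid3 (K : fieldType) (kd Q zc Pp Y Zd : K) : Y != 0 -> Zd != 0 ->
  kd * Q * zc * Pp = Y * (zc * Zd) * (Q / Y) * (kd * (Pp / Zd)).
Proof. move=> h1 h2; field; by rewrite h1 h2. Qed.

Lemma fid4 (K : fieldType) (r Y Ya Zb g : K) : Y != 0 -> Ya != 0 -> Zb != 0 ->
  (r * Y + Y * Ya * Zb * g) / (Y * Ya * Zb) - g = r / (Ya * Zb).
Proof. move=> h1 h2 h3; field; by rewrite h1 h2 h3. Qed.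

Lemma fid5 (K : fieldType) (f Ya Zb : K) : Ya != 0 -> Zb != 0 -> f = f * Ya * Zb / (Ya * Zb).
Proof. move=> h1 h2; field; by rewrite h1 h2. Qed.

Lemma fid6 (K : fieldType) (a Pv u v : K) : u != 0 -> v != 0 ->
  (1 + a * (Pv / u)) / v = v^-1 + Pv * (a * u^-1 * v^-1).
Proof. move=> h1 h2; field; by rewrite h1 h2. Qed.
Lemma fid7 (K : fieldType) (A V Pv st : K) : V != 0 -> A * V = Pv -> A + Pv * st = Pv * (V^-1 + st).
Proof. move=> h1 <-; field; exact: h1. Qed.
Lemma fid8 (K : fieldType) (Pv u X : K) : Pv != 0 -> u != 0 -> Pv * X / (Pv / u) = u * X.
Proof. move=> h1 h2; field; by rewrite h1 h2. Qed.

Section C.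
Variables (k : fieldType) (P1 P2 : {poly k}).
Notation BP1 p := (p \is a polyOver (Bkp P1 P2)).
Notation BP2 F := (F \is a polyOver (polyOver_pred (Bkp P1 P2))).
Notation LP := (LP P1 P2).
Notation ev := (@ev k).
Notation evi := (@evi k).

Definition Tp (S : nat) (Q : {poly k}) (H : {poly {poly k}}) : {poly {poly k}} :=
  \poly_(i < S.+1) (H`_(S - i) * Q ^+ (S - i)).

Lemma size_map_le (R1 R2 : nzRingType) (f : R1 -> R2) (p : {poly R1}) : (size (map_poly f p) <= size p)%N.
Proof. exact: size_poly. Qed.

Lemma evT (y z : Kx k) S (Q : {poly k}) (H : {poly {poly k}}) : y != 0 -> (size H <= S.+1)%N ->
  ev y z (Tp S Q H) = ev (peval Q z / y) z H * y ^+ S.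
Proof.
move=> y0 hS; rewrite /ev /= !horner_evalE.
rewrite (@horner_coef_wide _ S.+1 (map_poly (evi z) (Tp S Q H))); last first.
  by apply: leq_trans (size_map_le _ _) _; apply: size_poly.
rewrite (@horner_coef_wide _ S.+1 (map_poly (evi z) H)); last first.
  by apply: leq_trans (size_map_le _ _) hS.
rewrite mulr_suml (reindex_inj rev_ord_inj) /=; apply: eq_bigr => i _.
have hi : (i <= S)%N by rewrite -ltnS.
rewrite !coef_map /= coef_poly subSS ltnS leq_subr subKn // eviM eviXn eviE.
rewrite [y ^+ S](_ : _ = y ^+ (S - i) * y ^+ i); last by rewrite -exprD subnK.
rewrite expr_div_n -!mulrA; congr (_ * _); rewrite eviE; congr (_ * _).
by rewrite mulrC -mulrA (mulfV (expf_neq0 _ y0)) mulr1.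
Qed.

Lemma Indep_next' : True. Proof. by []. Qed.
Lemma Indep_next (y z : Kx k) (Q : {poly k}) : Indep y z -> Q != 0 -> Indep (peval Q z / y) z.
Proof.
move=> hI hQ H eH; have [y0 z0] := Indep_neq0 hI.
have := evT z Q y0 (leqnSn (size H)); rewrite eH mul0r => /hI T0.
apply/polyP => j; rewrite coef0; case: (ltnP j (size H)) => hj; last by rewrite nth_default.
have := congr1 (fun p : {poly {poly k}} => p`_(size H - j)) T0.
rewrite coef_poly coef0 ltnS leq_subr subKn ?(ltnW hj) // => /eqP.
by rewrite mulf_eq0 expf_eq0 (negbTE hQ) andbF orbF => /eqP.
Qed.

Lemma evSum (y z : Kx k) n (F : 'I_n -> {poly {poly k}}) :
  ev y z (\sum_(i < n) F i) = \sum_(i < n) ev y z (F i).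
Proof.
elim: n F => [|n IH] F; first by rewrite !big_ord0 ev0.
by rewrite !big_ord_recr /= evD IH.
Qed.

Lemma coef0Xn (R : nzRingType) (p : {poly R}) n : (p ^+ n)`_0 = p`_0 ^+ n.
Proof. by elim: n => [|n IH]; rewrite ?expr0 ?coefC // !exprS coef0M IH. Qed.

Lemma LPy (y z : Kx k) : LP y z y. Proof. by apply: gr_S; right; left. Qed.
Lemma LPyV (y z : Kx k) : LP y z y^-1. Proof. by apply: gr_S; right; right; left. Qed.
Lemma LPz (y z : Kx k) : LP y z z. Proof. by apply: gr_S; do 3 right; left. Qed.
Lemma LPzV (y z : Kx k) : LP y z z^-1. Proof. by apply: gr_S; do 4 right. Qed.

Definition Lloc (y z w v : Kx k) :=
  gen_ring (fun f => cs P1 P2 f \/ f = y \/ f = z \/ f = w \/ f = v).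

Lemma Lloc_perm y z w v f : Lloc y z w v f -> Lloc z y v w f.
Proof. by apply: gr_mono => g h; apply: gr_S; tauto. Qed.

Lemma csG (G : Kx k -> Prop) : forall f, cs P1 P2 f -> gen_ring (fun f => cs P1 P2 f \/ G f) f.
Proof. by move=> f h; apply: gr_S; left. Qed.

Lemma peval_neq0 (y z : Kx k) (Q : {poly k}) : Indep y z -> Q != 0 -> peval Q z != 0.
Proof.
move=> hI hQ; apply/eqP => e; have := hI Q%:P; rewrite ev_polyC eviE e => /(_ erefl) /eqP.
by rewrite polyC_eq0 (negbTE hQ).
Qed.

Lemma Lloc_LP (y z : Kx k) (P Q : {poly k}) f : Indep y z -> BP1 P -> BP1 Q -> Q != 0 ->
  Lloc y z (peval P y / z) (peval Q z / y) f -> LP z (peval Q z / y) f.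
Proof.
move=> hI hP hQ Q0; have [y0 z0] := Indep_neq0 hI.
have Qz0 := peval_neq0 hI Q0.
have hy : LP z (peval Q z / y) y.
  have ey : peval Q z * (peval Q z / y)^-1 = y.
    by rewrite invf_div mulrC (divfK Qz0).
  suff h : LP z (peval Q z / y) (peval Q z * (peval Q z / y)^-1) by rewrite ey in h.
  apply: gr_M; last exact: LPzV.
  by rewrite -eviE; apply: gr_evi; [move=> g hg; left| apply: LPy| exact: hQ].
apply: gr_mono => g [hc|[->|[->|[->|->]]]] //.
- by apply: gr_S; left.
- exact: LPy.
- apply: gr_M; last exact: LPyV.
  by rewrite -eviE; apply: gr_evi; [move=> g1 hg; left| exact: hy| exact: hP].
- exact: LPz.
Qed.

Lemma GL (y z : Kx k) (P Q : {poly k}) : Indep y z -> BP1 P -> BP1 Q -> P`_0 = 1 -> Q`_0 = 1 ->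
  forall A b (F : {poly {poly k}}), BP2 F ->
  LP z (peval Q z / y) (ev y z F / (y ^+ A * z ^+ b)) ->
  exists l G, Lloc y z (peval P y / z) (peval Q z / y) l /\ BP2 G /\
    ev y z F / (y ^+ A * z ^+ b) = l + ev y z G / z ^+ b.
Proof.
move=> hI hP hQ P0 Q0 A b; have [y0 z0] := Indep_neq0 hI.
have Qn0 : Q != 0 by apply/eqP => e; move: Q0; rewrite e coef0 => /eqP; rewrite eq_sym oner_eq0.
have Qz0 := peval_neq0 hI Qn0.
have hLL := fun f => @Lloc_LP y z P Q f hI hP hQ Qn0.
set v := peval Q z / y in hLL *; set w := peval P y / z in hLL *.
have v0 : v != 0 := mulf_neq0 Qz0 (invr_neq0 y0).
elim: A => [|A IH] F hF hLP.
  exists 0, F; split; first exact: gr_0. split; first exact: hF.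
  by rewrite expr0 mul1r add0r.
have [H [g [h [hH eH]]]] := NF z0 v0 hLP.
set f := ev y z F / (y ^+ A.+1 * z ^+ b) in hLP eH *.
set H' := swapXY H.
have hH' : BP2 H'.
  apply/polyOverP => i; apply/polyOverP => j; rewrite coef_swapXY.
  exact: (polyOverP (polyOverP hH j) i).
have eH' : ev v z H' = ev z v H by rewrite ev_swap.
pose S := (size H' + h + A.+1)%N.
have hS : (size H' <= S.+1)%N by rewrite /S; lia.
have eT := evT z Q y0 hS.
pose n := (A.+1 + h)%N.
have epoly : F * ('X ^+ g * Q ^+ h)%:P * 'X ^+ S = ('X ^+ b)%:P * 'X ^+ n * Tp S Q H'.
  apply/eqP; rewrite -subr_eq0; apply/eqP; apply: (hI).
  rewrite evB !evM !evXn ev_X !ev_polyC !eviM !eviXn evi_X eviE eT eH' -eH.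
  rewrite /f /v /n exprD expr_div_n.
  by apply: fid1; apply: expf_neq0; [exact: y0 | exact: z0 | exact: y0].
have eC := congr1 (fun p : {poly {poly k}} => p`_S) epoly; simpl in eC.
rewrite coefMXn ltnn subnn coefMC in eC.
rewrite [('X ^+ b)%:P * _ * _](_ : _ = 'X ^+ n * (('X ^+ b)%:P * Tp S Q H')) in eC;
  last by rewrite mulrA (mulrC ('X ^+ n)).
rewrite coefXnM in eC.
have hnS : (n <= S)%N by rewrite /n /S; lia.
rewrite ltnNge hnS /= coefCM coef_poly ltnS leq_subr subKn // in eC.
have eC' : F`_0 * 'X ^+ g = 'X ^+ b * H'`_n * Q ^+ A.+1.
  apply: (mulIf (expf_neq0 h Qn0)); rewrite -[LHS]mulrA eC /n exprD; ring.
have cop : coprimep (Q ^+ A.+1) ('X ^+ g).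
  apply: coprimep_expl; apply: coprimep_expr.
  have := coprimep_XsubC Q 0; rewrite polyC0 subr0 => ->.
  by rewrite rootE horner_coef0 Q0 oner_eq0.
have dv : Q ^+ A.+1 %| F`_0.
  by rewrite -(Gauss_dvdpl _ cop) eC' dvdp_mull.
pose D := F`_0 %/ Q ^+ A.+1.
have eD : D * Q ^+ A.+1 = F`_0 by rewrite divpK.
have hD : BP1 D.
  apply/polyOverP => i.
  have eD2 : D * 'X ^+ g = 'X ^+ b * H'`_n.
    by apply: (mulIf (expf_neq0 A.+1 Qn0)); rewrite mulrAC eD eC'.
  have := congr1 (fun p : {poly k} => p`_(i + g)) eD2.
  rewrite /= coefMXn ltnNge leq_addl /= addnK coefXnM => ->.
  case: ifP => _; first exact: rpred0.
  exact: (polyOverP (polyOverP hH' n)).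
pose Phi c := if (b <= c)%N then z ^+ (c - b) else w ^+ (b - c).
pose ge := v ^+ A.+1 * \sum_(c < size D) kemb D`_c * Phi c.
pose R2 := \sum_(c < size D) ((D`_c)%:P * Q ^+ A.+1 * 'X ^+ c)%:P * (map_poly polyC P) ^+ (b - c).
have eR2 : ev y z R2 = y ^+ A.+1 * z ^+ b * ge.
  rewrite evSum /ge mulrA mulr_sumr; apply: eq_bigr => c _.
  rewrite evM evXn ev_lift ev_polyC !eviM !eviXn evi_C evi_X eviE /Phi.
  case: leqP => hbc.
    have -> : (b - c = 0)%N by apply/eqP; rewrite subn_eq0.
    rewrite [z ^+ c](_ : _ = z ^+ b * z ^+ (c - b)); last by rewrite -exprD subnKC.
    rewrite /v expr_div_n expr0 mulr1; exact: fid2 (expf_neq0 _ y0).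
  rewrite [z ^+ b](_ : _ = z ^+ c * z ^+ (b - c)); last by rewrite -exprD subnKC // ltnW.
  rewrite /v /w !expr_div_n; exact: fid3 (expf_neq0 _ y0) (expf_neq0 _ z0).
have hPl : map_poly polyC P \is a polyOver (polyOver_pred (Bkp P1 P2)).
  by apply/polyOverP => i; rewrite coef_map /= polyOverC (polyOverP hP).
have hR2 : BP2 R2.
  apply: rpred_sum => c _; apply: rpredM; last exact: rpredX.
  rewrite polyOverC; apply: rpredM; last exact: rpredX (polyOverX _).
  by apply: rpredM; [rewrite polyOverC (polyOverP hD) | exact: rpredX].
pose R := F - R2.
have hR : BP2 R by apply: rpredB.
have R0 : R`_0 = 0.
  rewrite coefB coef_sum.
  have -> : \sum_(c < size D) (((D`_c)%:P * Q ^+ A.+1 * 'X ^+ c)%:P * map_poly polyC P ^+ (b - c))`_0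
      = Q ^+ A.+1 * D.
    have eDs : D = \sum_(c < size D) (D`_c)%:P * 'X ^+ c.
      by rewrite -{1}(coefK D) poly_def; apply: eq_bigr => c _; rewrite mul_polyC.
    rewrite [in RHS]eDs mulr_sumr; apply: eq_bigr => c _.
    by rewrite coefCM coef0Xn coef_map /= P0 expr1n mulr1 mulrCA mulrA.
  by rewrite -eD mulrC subrr.
pose R' := drop_poly 1 R.
have eR : R = R' * 'X.
  rewrite -[LHS](poly_take_drop 1) (_ : take_poly 1 R = 0) ?add0r ?expr1 //.
  by apply/polyP => i; rewrite coef_take_poly coef0; case: i => [|i] /=; rewrite ?R0.
have hR' : BP2 R'.
  by apply/polyOverP => i; rewrite coef_drop_poly; exact: (polyOverP hR).
have hge : Lloc y z w v ge.
  apply: gr_M; first by apply: gr_X; apply: gr_S; do 4 right.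
  apply: gr_sum => c; apply: gr_M.
    by apply: kemb_gr; [move=> g1 hg1; left | exact: (polyOverP hD)].
  by rewrite /Phi; case: ifP => _; apply: gr_X; apply: gr_S; [right; right; left | do 3 right; left].
have ef : f - ge = ev y z R' / (y ^+ A * z ^+ b).
  have e1 : ev y z R = ev y z R' * y by rewrite eR evM ev_X.
  rewrite /R evB eR2 in e1.
  rewrite /f; have -> : ev y z F = ev y z R' * y + y ^+ A.+1 * z ^+ b * ge by rewrite -e1 subrK.
  rewrite exprS; exact: fid4 y0 (expf_neq0 _ y0) (expf_neq0 _ z0).
have hLP' : LP z v (ev y z R' / (y ^+ A * z ^+ b)).
  by rewrite -ef; apply: gr_B => //; apply: hLL.
have [l' [G [hl' [hG e']]]] := IH R' hR' hLP'.
exists (ge + l'), G; split; first exact: gr_D.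
split; first exact: hG.
by rewrite -addrA -e' -ef addrC subrK.
Qed.

Lemma L1 (y z : Kx k) (P Q : {poly k}) f : Indep y z -> BP1 P -> BP1 Q -> P`_0 = 1 -> Q`_0 = 1 ->
  LP y z f -> LP (peval P y / z) y f -> LP z (peval Q z / y) f ->
  Lloc y z (peval P y / z) (peval Q z / y) f.
Proof.
move=> hI hP hQ P0 Q0 h1 h2 h3; have [y0 z0] := Indep_neq0 hI.
have Pn0 : P != 0 by apply/eqP => e; move: P0; rewrite e coef0 => /eqP; rewrite eq_sym oner_eq0.
have [F [a [b [hF eF]]]] := NF y0 z0 h1.
have ef : f = ev y z F / (y ^+ a * z ^+ b).
  by rewrite -eF; apply: fid5; apply: expf_neq0; [exact: y0| exact: z0].
rewrite ef in h3.
have [l1 [G1 [hl1 [hG1 e1]]]] := GL hI hP hQ P0 Q0 hF h3.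
have hIs := Indep_swap hI.
have hG1s : BP2 (swapXY G1).
  apply/polyOverP => i; apply/polyOverP => j; rewrite coef_swapXY.
  exact: (polyOverP (polyOverP hG1 j) i).
have e2 : ev y z G1 / z ^+ b = ev z y (swapXY G1) / (z ^+ b * y ^+ 0).
  by rewrite ev_swap expr0 mulr1.
have hl1' : LP y (peval P y / z) l1 := Lloc_LP hIs hQ hP Pn0 (Lloc_perm hl1).
have h4 : LP y (peval P y / z) (ev z y (swapXY G1) / (z ^+ b * y ^+ 0)).
  rewrite -e2; have -> : ev y z G1 / z ^+ b = f - l1 by rewrite ef e1 addrAC subrr add0r.
  by apply: gr_B => //; apply: LP_swap.
have [l2 [G2 [hl2 [hG2 e3]]]] := GL hIs hQ hP Q0 P0 hG1s h4.
rewrite ef e1 e2 e3 expr0 divr1.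
apply: gr_D; first exact: hl1.
apply: gr_D; first exact: Lloc_perm.
apply: gr_ev; [move=> g hg; left; exact: hg | apply: gr_S; do 2 right; left; reflexivity | apply: gr_S; right; left; reflexivity | exact: hG2].
Qed.

Lemma peval_sum (p : {poly k}) (x : Kx k) :
  peval p x = \sum_(i < size (map_poly (@kemb k) p)) (map_poly (@kemb k) p)`_i * x ^+ i.
Proof. by rewrite /peval horner_coef. Qed.

Lemma peval_shift (G : Kx k -> Prop) (p : {poly k}) a b : (forall f, cs P1 P2 f -> G f) -> BP1 p ->
  gen_ring G a -> gen_ring G b ->
  exists t, gen_ring G t /\ peval p (a + b) = peval p a + b * t.
Proof.
move=> hG hp ha hb.
exists (\sum_(i < size (map_poly (@kemb k) p)) (map_poly (@kemb k) p)`_i *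
   \sum_(j < i) (a + b) ^+ (i.-1 - j) * a ^+ j); split.
  apply: gr_sum => i; apply: gr_M.
    rewrite coef_map /=; apply: kemb_gr; [exact: hG | exact: (polyOverP hp)].
  by apply: gr_sum => j; apply: gr_M; apply: gr_X => //; apply: gr_D.
rewrite !peval_sum mulr_sumr -big_split /=; apply: eq_bigr => i _.
have := subrXX (a + b) a i; rewrite addrAC subrr add0r => e.
by rewrite mulrCA -mulrDr -e [a ^+ i + _]addrC subrK.
Qed.

Lemma peval_pal (P : {poly k}) (v : Kx k) : palindromic P -> v != 0 ->
  peval P v^-1 * v ^+ (size P).-1 = peval P v.
Proof.
move=> hpal v0; rewrite !peval_sum size_map_poly mulr_suml.
case e : (size P) => [|n]; first by rewrite !big_ord0.
rewrite /= (reindex_inj rev_ord_inj) /=; apply: eq_bigr => i _.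
rewrite !coef_map /= subSS.
have hi : (i <= n)%N by rewrite -ltnS.
have -> : P`_(n - i) = P`_i.
  by rewrite hpal e /= ?leq_subr // subKn.
rewrite -mulrA; congr (_ * _).
rewrite [v ^+ n](_ : _ = v ^+ (n - i) * v ^+ (n - (n - i))); last by rewrite -exprD subnKC ?leq_subr.
by rewrite subKn // exprVn mulrA (mulVf (expf_neq0 _ v0)) mul1r.
Qed.

Lemma L2 (v u y z w : Kx k) (P Q : {poly k}) : BP1 P -> BP1 Q -> palindromic P -> Q`_0 = 1 ->
  v != 0 -> u != 0 -> peval P v != 0 ->
  z = peval P v / u -> y = peval Q z / v -> w = peval P y / z -> LP v u w.
Proof.
move=> hP hQ hpal Q0 v0 u0 Pv0 ez ey ew.
have hcs : forall f, cs P1 P2 f -> (fun f => cs P1 P2 f \/ f = v \/ f = v^-1 \/ f = u \/ f = u^-1) f.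
  by move=> f hf; left.
pose Q1 := drop_poly 1 Q.
have hQ1 : BP1 Q1 by apply/polyOverP => i; rewrite coef_drop_poly; exact: (polyOverP hQ).
have eQ : peval Q z = 1 + peval Q1 z * z.
  have e : Q = (Q`_0)%:P + Q1 * 'X.
    rewrite -[LHS](poly_take_drop 1) expr1; congr (_ + _).
    by apply/polyP => i; rewrite coef_take_poly coefC; case: i.
  by rewrite -eviE {1}e eviD eviM evi_C evi_X Q0 kemb1.
have hPv : LP v u (peval P v).
  by rewrite -eviE; apply: gr_evi; [exact: hcs | exact: LPy | exact: hP].
have hz : LP v u z by rewrite ez; apply: gr_M; [exact: hPv | exact: LPzV].
pose s := peval Q1 z * u^-1 * v^-1.
have hs : LP v u s.
  apply: gr_M; last exact: LPyV.
  apply: gr_M; last exact: LPzV.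
  by rewrite -eviE; apply: gr_evi; [exact: hcs | exact: hz | exact: hQ1].
have ey' : y = v^-1 + peval P v * s.
  by rewrite ey eQ {2}ez; exact: fid6 _ _ u0 v0.
have [t [ht et]] := peval_shift hcs hP (LPyV v u) (gr_M hPv hs).
have pal := peval_pal hpal v0.
have ePy : peval P y = peval P v * ((v ^+ (size P).-1)^-1 + s * t).
  rewrite ey' et -[peval P v * s * t]mulrA.
  by apply: fid7; [exact: expf_neq0 _ v0 | exact: pal].
rewrite ew ePy ez (fid8 _ Pv0 u0).
apply: gr_M; first exact: LPz.
apply: gr_D; last exact: gr_M.
by rewrite -exprVn; apply: gr_X; exact: LPyV.
Qed.
End C.


Lemma parS (j : int) : odd (absz (j + 1)) = ~~ odd (absz j).
Proof.
case: j => n.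
  by rewrite -[1]/(1%:Z) -PoszD addn1 /=.
rewrite NegzE (_ : - (n.+1)%:Z + 1 = - n%:Z); last by lia.
by rewrite !abszN /= negbK.
Qed.

Section D.
Variables (k : fieldType) (P1 P2 : {poly k}).
Notation x := (xseq P1 P2).
Definition Rp (j : int) := if odd (absz j) then P2 else P1.

Lemma Rp2 j : Rp (j + 2) = Rp j.
Proof. by rewrite /Rp (_ : j + 2 = j + 1 + 1) ?parS ?negbK //; ring. Qed.
Lemma Rpm j : Rp (j - 1) = Rp (j + 1).
Proof. by rewrite -Rp2 (_ : j - 1 + 2 = j + 1) //; ring. Qed.

Lemma fpairS n : fpair P1 P2 n.+1 =
  ((fpair P1 P2 n).2, peval (if odd n then P2 else P1) (fpair P1 P2 n).2 / (fpair P1 P2 n).1).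
Proof. by rewrite /=; case: (fpair P1 P2 n). Qed.
Lemma bpairS n : bpair P1 P2 n.+1 =
  ((bpair P1 P2 n).2, peval (if odd n then P1 else P2) (bpair P1 P2 n).2 / (bpair P1 P2 n).1).
Proof. by rewrite /=; case: (bpair P1 P2 n). Qed.

Lemma x_pos n : x (n.+1)%:Z = (fpair P1 P2 n).1.
Proof.
rewrite /xseq (_ : (1 <= (n.+1)%:Z) = true); last by lia.
by rewrite (_ : (n.+1)%:Z - 1 = n%:Z) //; lia.
Qed.
Lemma x_nonpos n : x (- n%:Z) = (bpair P1 P2 n.+1).2.
Proof.
rewrite /xseq (_ : (1 <= - n%:Z) = false); last by lia.
by rewrite (_ : 1 - - n%:Z = (n.+1)%:Z) //; lia.
Qed.
Lemma fp2 n : (fpair P1 P2 n).2 = x (n.+2)%:Z.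
Proof. by rewrite x_pos fpairS. Qed.
Lemma bp2 n : (bpair P1 P2 n).2 = x (1 - n%:Z).
Proof.
case: n => [|n]; first by rewrite x_pos.
by rewrite (_ : 1 - (n.+1)%:Z = - n%:Z) ?x_nonpos //; lia.
Qed.
Lemma bp1 n : (bpair P1 P2 n).1 = x (2 - n%:Z).
Proof.
case: n => [|n]; first by rewrite (_ : 2 - 0%:Z = 2%:Z) // x_pos fpairS.
by rewrite bpairS /= bp2; congr x; lia.
Qed.

Lemma FWn n : x (n.+3)%:Z = peval (Rp (n.+2)%:Z) (x (n.+2)%:Z) / x (n.+1)%:Z.
Proof.
by rewrite x_pos !fpairS /= fp2 -x_pos /Rp /=; case: (odd n).
Qed.
Lemma BWn n : x (- n%:Z) = peval (Rp (1 - n%:Z)) (x (1 - n%:Z)) / x (2 - n%:Z).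
Proof.
rewrite x_nonpos bpairS /= bp2 bp1 /Rp; congr (peval _ _ / _).
case: n => [|n] //=.
rewrite (_ : 1 - (n.+1)%:Z = - n%:Z); last by lia.
by rewrite abszN /=; case: (odd n).
Qed.

Hypotheses (hm1 : P1 \is monic) (hm2 : P2 \is monic).
Hypotheses (hp1 : palindromic P1) (hp2 : palindromic P2).

Lemma Rp_neq0 j : Rp j != 0.
Proof. by rewrite /Rp; case: ifP => _; apply: monic_neq0. Qed.

Lemma Ind_base : Indep (x 1) (x 2).
Proof. by rewrite (x_pos 0) (x_pos 1) /=; apply: Indep_swap; apply: Indep_base. Qed.

Lemma IndP n : Indep (x (n.+1)%:Z) (x (n.+2)%:Z).
Proof.
elim: n => [|n IH]; first exact: Ind_base.
rewrite FWn; apply: Indep_swap; apply: Indep_next => //; exact: Rp_neq0.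
Qed.

Lemma IndN n : Indep (x (1 - n%:Z)) (x (2 - n%:Z)).
Proof.
elim: n => [|n IH].
  have -> : 1 - 0%:Z = 1 by lia.
  have -> : 2 - 0%:Z = 2 by lia.
  exact: Ind_base.
rewrite (_ : 1 - (n.+1)%:Z = - n%:Z); last by lia.
rewrite (_ : 2 - (n.+1)%:Z = 1 - n%:Z); last by lia.
rewrite BWn; apply: Indep_next; last exact: Rp_neq0.
exact: Indep_swap.
Qed.

Lemma IndAll j : Indep (x j) (x (j + 1)).
Proof.
case: j => [[|n]|n].
- have := IndN (n:=1); rewrite (_ : 1 - 1%:Z = 0%:Z); last by lia.
  by rewrite (_ : 2 - 1%:Z = 0%:Z + 1) //; lia.
- by have := IndP (n:=n); rewrite (_ : (n.+2)%:Z = (n.+1)%:Z + 1) //; lia.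
- have := IndN (n:=n.+2); rewrite NegzE (_ : 1 - (n.+2)%:Z = - (n.+1)%:Z); last by lia.
  by rewrite (_ : 2 - (n.+2)%:Z = - (n.+1)%:Z + 1) //; lia.
Qed.

Lemma x_neq0 j : x j != 0.
Proof. by have [] := Indep_neq0 (IndAll (j:=j)). Qed.

Lemma REC j : x (j + 1) * x (j - 1) = peval (Rp j) (x j).
Proof.
have [hj|hj] : (2 <= j) \/ (j <= 1) by lia.
- have [n ->] : exists n : nat, j = (n.+2)%:Z by exists (absz j - 2)%N; lia.
  have -> : (n.+2)%:Z + 1 = (n.+3)%:Z by lia.
  have -> : (n.+2)%:Z - 1 = (n.+1)%:Z by lia.
  by rewrite FWn (divfK (x_neq0 _)).
- have [n ->] : exists n : nat, j = 1 - n%:Z by exists (absz (1 - j)); lia.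
  rewrite (_ : 1 - n%:Z - 1 = - n%:Z); last by lia.
  rewrite BWn (_ : 1 - n%:Z + 1 = 2 - n%:Z); last by lia.
  by rewrite mulrC (divfK (x_neq0 _)).
Qed.

Lemma xeq i i' : i = i' -> x i = x i'. Proof. by move=> ->. Qed.

Lemma xnext j : x (j + 2) = peval (Rp (j + 1)) (x (j + 1)) / x j.
Proof.
have := REC (j + 1); rewrite (xeq (_ : j + 1 + 1 = j + 2)); last by ring.
rewrite (xeq (_ : j + 1 - 1 = j)); last by ring.
by move=> <-; rewrite (mulfK (x_neq0 _)).
Qed.
Lemma xprev j : x (j - 1) = peval (Rp j) (x j) / x (j + 1).
Proof. by rewrite -REC [_ * x (j - 1)]mulrC (mulfK (x_neq0 _)). Qed.

Lemma Rp_BP j : Rp j \is a polyOver (Bkp P1 P2).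
Proof.
rewrite /Rp; case: ifP => _; apply/polyOverP => i; apply/asbP; apply: gr_S; exists i; tauto.
Qed.
Lemma pal0 (P : {poly k}) : P \is monic -> palindromic P -> P`_0 = 1.
Proof. by move=> hm hp; rewrite hp ?leq0n // subn0 -lead_coefE (monicP hm). Qed.
Lemma Rp0 j : (Rp j)`_0 = 1.
Proof. by rewrite /Rp; case: ifP => _; apply: pal0. Qed.
Lemma Rp_pal j : palindromic (Rp j).
Proof. by rewrite /Rp; case: ifP. Qed.

Notation T j := (LP P1 P2 (x j) (x (j + 1))).

Lemma cond j : forall f, cs P1 P2 f ->
  (fun f => cs P1 P2 f \/ f = x j \/ f = (x j)^-1 \/ f = x (j + 1) \/ f = (x (j + 1))^-1) f.
Proof. by move=> f hf; left. Qed.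

Lemma mem_m1 j : T j (x (j - 1)).
Proof.
rewrite xprev; apply: gr_M; last exact: LPzV.
by rewrite -eviE; apply: gr_evi; [exact: cond | exact: LPy | exact: Rp_BP].
Qed.
Lemma mem_p2 j : T j (x (j + 2)).
Proof.
rewrite xnext; apply: gr_M; last exact: LPyV.
by rewrite -eviE; apply: gr_evi; [exact: cond | exact: LPz | exact: Rp_BP].
Qed.
Lemma mem_m2 j : T j (x (j - 2)).
Proof.
rewrite (xeq (_ : j - 2 = j - 1 - 1)); last by ring.
rewrite xprev (xeq (_ : j - 1 + 1 = j)); last by ring.
apply: gr_M; last exact: LPyV.
by rewrite -eviE; apply: gr_evi; [exact: cond | exact: mem_m1 | exact: Rp_BP].
Qed.
Lemma mem_p3 j : T j (x (j + 3)).
Proof.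
rewrite (xeq (_ : j + 3 = j + 1 + 2)); last by ring.
rewrite xnext (xeq (_ : j + 1 + 1 = j + 2)); last by ring.
apply: gr_M; last exact: LPzV.
by rewrite -eviE; apply: gr_evi; [exact: cond | exact: mem_p2 | exact: Rp_BP].
Qed.

Lemma Pv_neq0_prev j : peval (Rp j) (x j) != 0.
Proof.
apply/eqP => e; have := x_neq0 (j - 1); rewrite xprev e mul0r eqxx //.
Qed.
Lemma Pv_neq0_next j : peval (Rp (j + 1)) (x (j + 1)) != 0.
Proof.
apply/eqP => e; have := x_neq0 (j + 2); rewrite xnext e mul0r eqxx //.
Qed.

Lemma mem_m3 j : T j (x (j - 3)).
Proof.
apply: (L2 (y := x (j - 2)) (z := x (j - 1)) (Q := Rp (j - 1)) (Rp_BP j) (Rp_BP (j - 1)) (Rp_pal (j:=j)) (Rp0 _)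
   (x_neq0 j) (x_neq0 (j + 1)) (Pv_neq0_prev j)).
- exact: xprev.
- rewrite (xeq (_ : j - 2 = j - 1 - 1)); last by ring.
  by rewrite xprev (xeq (_ : j - 1 + 1 = j)) //; ring.
- rewrite (xeq (_ : j - 3 = j - 2 - 1)); last by ring.
  rewrite xprev (xeq (_ : j - 2 + 1 = j - 1)); last by ring.
  by rewrite -{1}(Rp2 (j - 2)) (_ : j - 2 + 2 = j) //; ring.
Qed.
Lemma mem_p4 j : T j (x (j + 4)).
Proof.
apply: LP_swap.
apply: (L2 (y := x (j + 3)) (z := x (j + 2)) (Q := Rp (j + 2)) (Rp_BP (j + 1)) (Rp_BP (j + 2)) (Rp_pal (j:=j + 1)) (Rp0 _)
   (x_neq0 (j + 1)) (x_neq0 j) (Pv_neq0_next j)).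
- exact: xnext.
- rewrite (xeq (_ : j + 3 = j + 1 + 2)); last by ring.
  by rewrite xnext (xeq (_ : j + 1 + 1 = j + 2)) // (_ : j + 1 + 1 = j + 2) //; ring.
- rewrite (xeq (_ : j + 4 = j + 2 + 2)); last by ring.
  rewrite xnext (xeq (_ : j + 2 + 1 = j + 3)); last by ring.
  by rewrite (_ : j + 2 + 1 = j + 1 + 2) ?Rp2 //; ring.
Qed.

Lemma MemT j d : -3 <= d <= 4 -> T j (x (j + d)).
Proof.
move=> hd.
have : d = -3 \/ d = -2 \/ d = -1 \/ d = 0 \/ d = 1 \/ d = 2 \/ d = 3 \/ d = 4 by lia.
case=> [->|[->|[->|[->|[->|[->|[->|->]]]]]]].
- exact: mem_m3.
- exact: mem_m2.
- exact: mem_m1.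
- by rewrite addr0; apply: LPy.
- exact: LPz.
- exact: mem_p2.
- exact: mem_p3.
- exact: mem_p4.
Qed.

Lemma UL m f : Tring P1 P2 (m - 1) f -> Tring P1 P2 m f -> Tring P1 P2 (m + 1) f ->
  Lloc P1 P2 (x m) (x (m + 1)) (x (m - 1)) (x (m + 2)) f.
Proof.
move=> h1 h2 h3.
have h1' : LP P1 P2 (peval (Rp m) (x m) / x (m + 1)) (x m) f.
  by rewrite -xprev -(xeq (_ : m - 1 + 1 = m)) //; ring.
have h3' : LP P1 P2 (x (m + 1)) (peval (Rp (m + 1)) (x (m + 1)) / x m) f.
  by rewrite -xnext -(xeq (_ : m + 1 + 1 = m + 2)) //; ring.
have := L1 (IndAll (j:=m)) (Rp_BP m) (Rp_BP (m + 1)) (Rp0 m) (Rp0 (m + 1)) h2 h1' h3'.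
by rewrite -xprev -xnext.
Qed.

Lemma LlocT m j f : m - 2 <= j <= m + 2 ->
  Lloc P1 P2 (x m) (x (m + 1)) (x (m - 1)) (x (m + 2)) f -> Tring P1 P2 j f.
Proof.
move=> hj; apply: gr_mono => g [hc|[->|[->|[->|->]]]].
- by apply: gr_S; left.
- by rewrite (xeq (_ : m = j + (m - j))); [apply: MemT; lia | ring].
- by rewrite (xeq (_ : m + 1 = j + (m + 1 - j))); [apply: MemT; lia | ring].
- by rewrite (xeq (_ : m - 1 = j + (m - 1 - j))); [apply: MemT; lia | ring].
- by rewrite (xeq (_ : m + 2 = j + (m + 2 - j))); [apply: MemT; lia | ring].
Qed.

Lemma LlocA m f : Lloc P1 P2 (x m) (x (m + 1)) (x (m - 1)) (x (m + 2)) f -> clusterA P1 P2 f.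
Proof.
apply: gr_mono => g [hc|[->|[->|[->|->]]]]; first by apply: gr_S; left.
all: by apply: gr_S; right; eexists.
Qed.

Definition U m f := [/\ Tring P1 P2 (m - 1) f, Tring P1 P2 m f & Tring P1 P2 (m + 1) f].

Lemma Ustep m f : U m f -> U (m + 1) f /\ U (m - 1) f.
Proof.
case=> h1 h2 h3; have hL := UL h1 h2 h3.
split; split; apply: (LlocT (m := m)) => //; lia.
Qed.

Lemma Uall m f : U m f -> forall j, U j f.
Proof.
move=> hU j.
have hp : forall n : nat, U (m + n%:Z) f /\ U (m - n%:Z) f.
  elim=> [|n [IH1 IH2]]; first by split; [rewrite (_ : m + 0%:Z = m) | rewrite (_ : m - 0%:Z = m)] => //; lia.
  split.
    by rewrite (_ : m + (n.+1)%:Z = m + n%:Z + 1); [case: (Ustep IH1) | lia].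
  by rewrite (_ : m - (n.+1)%:Z = m - n%:Z - 1); [case: (Ustep IH2) | lia].
have [h|h] : (m <= j) \/ (j <= m) by lia.
- have [n ->] : exists n : nat, j = m + n%:Z by exists (absz (j - m)); lia.
  by case: (hp n).
- have [n ->] : exists n : nat, j = m - n%:Z by exists (absz (m - j)); lia.
  by case: (hp n).
Qed.

Lemma xU i : U i (x i).
Proof.
have hL : Lloc P1 P2 (x i) (x (i + 1)) (x (i - 1)) (x (i + 2)) (x i).
  by apply: gr_S; right; left.
by split; apply: (LlocT (m := i)) => //; lia.
Qed.

Lemma main_res m :
  (forall f : Kx k, clusterA P1 P2 f <-> (forall j : int, Tring P1 P2 j f)) /\
  (forall f : Kx k, (forall j : int, Tring P1 P2 j f) <->
     [/\ Tring P1 P2 (m - 1) f, Tring P1 P2 m f & Tring P1 P2 (m + 1) f]).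
Proof.
split=> f; split.
- move=> hA j; elim: hA => {f} [f [hc|[i ->]]||||].
  + by apply: gr_S; left.
  + by case: (Uall (xU i) j).
  + exact: gr_1.
  + by move=> ? _ ?; apply: gr_N.
  + by move=> ? ? _ ? _ ?; apply: gr_D.
  + by move=> ? ? _ ? _ ?; apply: gr_M.
- move=> h; apply: (LlocA (m := 0)); apply: UL; apply: h.
- by move=> h; split; apply: h.
- by move=> hU j; case: (Uall hU j).
Qed.
End D.

Unset Implicit Arguments.

Theorem theorem2p5 (k : fieldType) (P1 P2 : {poly k}) (m : int) :
  [pchar k] =i pred0 ->
  P1 \is monic -> P2 \is monic ->
  palindromic P1 -> palindromic P2 ->
  (forall f : Kx k, clusterA P1 P2 f <-> (forall j : int, Tring P1 P2 j f)) /\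
  (forall f : Kx k, (forall j : int, Tring P1 P2 j f) <->
     [/\ Tring P1 P2 (m - 1) f, Tring P1 P2 m f & Tring P1 P2 (m + 1) f]).
Proof.
move=> _ hm1 hm2 hp1 hp2.
exact: (main_res hm1 hm2 hp1 hp2 m).
Qed.
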